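(* Let $(S,\mathcal{S})$ be a measurable space, let $\mathcal{E}\subseteq \mathcal{P}(S)$ be a $\cap$-stable collection with $\sigma(\mathcal{E})=\mathcal{S}$, and let $\pi_{1},\pi_{2}:\Omega\to C(S)$ be two cr-sets. Suppose $\pi_{1}$ and $\pi_{2}$ are both $\sigma$-finite on $\mathcal{E}$ and satisfy \[ P_{\pi_{1}}(N_{A_{1}}=k_{1},\ldots, N_{A_{n}}=k_{n})=P_{\pi_{2}}(N_{A_{1}}=k_{1},\ldots, N_{A_{n}}=k_{n})\] for all $n\in \mathbb{N}$, all $A_{1},\ldots,A_{n}\in\mathcal{E}$ and all $k_{1},\ldots,k_{n}\in\mathbb{N}_{0}\cup\{\infty\}$. Then $P_{\pi_{1}}=P_{\pi_{2}}$.
   Context: $(\Omega,\mathcal{F},P)$ is a probability space. $C(S)$ denotes the set of all countable (finite or denumerable) subsets of $S$. For $A\subseteq S$, $N_A:C(S)\to\mathbb{N}_0\cup\{\infty\}$, $M\mapsto |A\cap M|$. $\mathcal{C}(\mathcal{S})$ is the smallest $\sigma$-field on $C(S)$ making all $N_A$, $A\in\mathcal{S}$, measurable. A countable random set (cr-set) is an $\mathcal{F}$-$\mathcal{C}(\mathcal{S})$ measurable map $\pi:\Omega\to C(S)$; $P_\pi$ denotes its law on $(C(S),\mathcal{C}(\mathcal{S}))$. A map $\tau:\Omega\to C(S)$ is finite if $|\tau(\omega)|<\infty$ for all $\omega$, and is $\sigma$-finite on $\mathcal{E}\subseteq\mathcal{S}$ if there are $A_n\in\mathcal{E}$, $n\in\mathbb{N}$,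 with $S=\bigcup_n A_n$ such that $|\tau(\omega)\cap A_n|<\infty$ for all $\omega\in\Omega$ and all $n$. *)

(* Defs.v *)
From HB Require Import structures.
From mathcomp Require Import all_boot all_order all_algebra.
From mathcomp Require Import all_classical all_reals all_analysis.
Set Implicit Arguments. Unset Strict Implicit. Unset Printing Implicit Defensive.
Import Order.TTheory GRing.Theory Num.Theory.
Local Open Scope classical_set_scope.
Local Open Scope ring_scope.
Local Open Scope card_scope.

(* N_0 ∪ {∞}: [Some k] is the finite value k, [None] is ∞. *)
Definition natinf := option nat.

Definition CS (S : Type) := {M : set S | countable M}.

Definition NA_eq {S : Type} (A : set S) (M : set S) (k : natinf) : Prop :=
  match k with
  | Some n => (A `&` M) #= `I_n
  | None => ~ finite_set (A `&` M)
  end.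

Definition Csigma {d} {S : measurableType d} : set (set (CS S)) :=
  <<s [set B | exists A : set S, exists k : natinf,
         measurable A /\ B = [set M : CS S | NA_eq A (proj1_sig M) k]] >>.

Definition crset {d d'} {S : measurableType d} {Om : measurableType d'}
  (pi : Om -> CS S) : Prop :=
  forall B, Csigma B -> measurable (pi @^-1` B).

Definition law {d d'} {S : measurableType d} {Om : measurableType d'}
  {R : realType} (P : probability Om R) (pi : Om -> CS S)
  (B : set (CS S)) : \bar R := P (pi @^-1` B).

Definition sigma_finite_on {S : Type} {Om : Type} (E : set (set S))
  (pi : Om -> CS S) : Prop :=
  exists A : nat -> set S, (forall n, E (A n)) /\ \bigcup_n A n = setT /\
    forall w n, finite_set (proj1_sig (pi w) `&` A n).

(* Main.v *)
Require Import Defs.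
From HB Require Import structures.
From mathcomp Require Import all_boot all_order all_algebra finmap.
From mathcomp Require Import all_classical all_reals all_analysis.
From mathcomp Require Import zify.
From Stdlib Require Cantor.
Set Implicit Arguments. Unset Strict Implicit. Unset Printing Implicit Defensive.
Local Open Scope classical_set_scope.

Definition cf {T : choiceType} (X : set T) : nat := #|` fset_set X|%fset.

Lemma cf_D {T : choiceType} (X Y : set T) :
  finite_set X -> Y `<=` X -> cf (X `\` Y) = (cf X - cf Y)%N.
Proof.
move=> fX YX; have fY := sub_finite_set YX fX.
rewrite /cf fset_setD // cardfsDS //; by rewrite -fset_set_sub.
Qed.

Lemma cf_U {T : choiceType} (X Y : set T) :
  finite_set X -> finite_set Y -> X `&` Y = set0 -> cf (X `|` Y) = (cf X + cf Y)%N.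
Proof.
move=> fX fY XY; rewrite /cf fset_setU // cardfsU -fset_setI // XY fset_set0.
by rewrite cardfs0 subn0.
Qed.

Lemma cf_sub_eq {T : choiceType} (Y Z : set T) :
  finite_set Z -> Y `<=` Z -> cf Y = cf Z -> Y = Z.
Proof.
move=> fZ YZ e; have : cf (Z `\` Y) = 0%N by rewrite cf_D // e subnn.
move=> /cardfs0_eq /fset_set_set0; rewrite setD_eq0 => /(_ (finite_setD _ fZ)) ZY.
by rewrite eqEsubset; split.
Qed.

Lemma finite_II n : finite_set `I_n.
Proof. by exists n; apply: card_eqxx. Qed.

Lemma cf_eqI {T : choiceType} (X : set T) n :
  finite_set X -> ((X #= `I_n)%card <-> cf X = n).
Proof.
move=> fX; split; first by move/card_fset_set.
move=> e; apply/(fcard_eq fX (finite_II n)).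
by rewrite (card_fset_set (card_eqxx _)).
Qed.

Lemma nd_sub {T : Type} (F : nat -> set T) : nondecreasing_seq F ->
  forall a b, (a <= b)%N -> F a `<=` F b.
Proof. by move=> ndF a b ab; apply/subsetPset/ndF. Qed.

Lemma stab1 {T : choiceType} (F : nat -> set T) : nondecreasing_seq F ->
  finite_set (\bigcup_i F i) -> exists N, forall i, F (N + i)%N = \bigcup_i F i.
Proof.
move=> ndF fU.
have H : forall l : seq T, (forall x, x \in l -> exists i, F i x) ->
    exists N, forall x, x \in l -> F N x.
  elim=> [|a l IH] Hl; first by exists 0%N.
  have [i Fi] := Hl a (mem_head _ _).
  have [N HN] := IH (fun x xl => Hl x (introT orP (or_intror xl))).
  exists (maxn i N) => x; rewrite inE => /orP[/eqP->|xl].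
    by apply: (nd_sub ndF (leq_maxl _ _)).
  by apply: (nd_sub ndF (leq_maxr _ _)); apply: HN.
have [N HN] : exists N, forall x, x \in fset_set (\bigcup_i F i) -> F N x.
  apply: H => x; rewrite in_fset_set // inE => -[j _ Fj]; by exists j.
exists N => i; rewrite eqEsubset; split; first by move=> x Fx; exists (N+i)%N.
move=> x Ux; apply: (nd_sub ndF (leq_addr i N)); apply: HN.
by rewrite in_fset_set // inE.
Qed.

Lemma stab2 {T : choiceType} (F : nat -> set T) N : nondecreasing_seq F ->
  (forall i, finite_set (F i)) -> (forall i, cf (F (N + i)%N) = cf (F N)) ->
  \bigcup_i F i = F N.
Proof.
move=> ndF fF e.
have eq : forall i, F N = F (N + i)%N.
  move=> i; apply: cf_sub_eq => //; first exact: (nd_sub ndF (leq_addr _ _)).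
rewrite eqEsubset; split; last by move=> x Fx; exists N.
move=> x [k _ Fk]; rewrite (eq k); apply: (nd_sub ndF (leq_addl _ _)) Fk.
Qed.

Lemma saT {T : Type} (G : set (set T)) : sigma_algebra setT G -> G setT.
Proof. by case=> G0 GC _; rewrite -setC0 -setTD; apply: GC. Qed.
Lemma saC {T : Type} (G : set (set T)) : sigma_algebra setT G -> forall A, G A -> G (~` A).
Proof. by case=> _ GC _ A GA; rewrite -setTD; apply: GC. Qed.
Lemma saU {T : Type} (G : set (set T)) : sigma_algebra setT G ->
  forall (F : nat -> set T), (forall n, G (F n)) -> G (\bigcup_n F n).
Proof. by case=> _ _ GU; apply: GU. Qed.
Lemma sa0 {T : Type} (G : set (set T)) : sigma_algebra setT G -> G set0.
Proof. by case. Qed.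
Lemma saCap {T : Type} (G : set (set T)) : sigma_algebra setT G ->
  forall (F : nat -> set T), (forall n, G (F n)) -> G (\bigcap_n F n).
Proof.
move=> sG F GF; rewrite -(setCK (\bigcap_n F n)) setC_bigcap; apply: saC => //.
by apply: saU => // n; apply: saC.
Qed.
Lemma saUn {T : Type} (G : set (set T)) : sigma_algebra setT G ->
  forall A B, G A -> G B -> G (A `|` B).
Proof.
move=> sG A B GA GB; rewrite -bigcup2E; apply: saU => // -[|[|n]] //=.
exact: sa0.
Qed.
Lemma saI {T : Type} (G : set (set T)) : sigma_algebra setT G ->
  forall A B, G A -> G B -> G (A `&` B).
Proof.
move=> sG A B GA GB; rewrite -(setCK (A `&` B)) setCI; apply: saC => //.
by apply: saUn => //; apply: saC.
Qed.

Definition good {X : Type} (G : set (set X)) (T : set X) (Y : set X) :=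
  exists Z, G Z /\ Y `&` T = Z `&` T.

Lemma good_of {X : Type} (G : set (set X)) T Z : G Z -> good G T Z.
Proof. by move=> GZ; exists Z. Qed.

Lemma good_ext {X : Type} (G : set (set X)) T (Y Y' : set X) :
  (forall x, T x -> (Y x <-> Y' x)) -> good G T Y' -> good G T Y.
Proof.
move=> e [Z [GZ YZ]]; exists Z; split => //; rewrite -YZ.
by rewrite eqEsubset; split => x [yx tx]; split => //; apply/(e x tx).
Qed.

Lemma good_C {X : Type} (G : set (set X)) T : sigma_algebra setT G ->
  forall Y, good G T Y -> good G T (~` Y).
Proof.
move=> sG Y [Z [GZ YZ]]; exists (~` Z); split; first exact: saC.
rewrite eqEsubset; split => x [nY Tx]; split => //.
  by move=> Zx; apply: nY; have : (Z `&` T) x by []; rewrite -YZ => -[].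
by move=> Yx; apply: nY; have : (Y `&` T) x by []; rewrite YZ => -[].
Qed.

Lemma good_U {X : Type} (G : set (set X)) T : sigma_algebra setT G ->
  forall F : nat -> set X, (forall n, good G T (F n)) -> good G T (\bigcup_n F n).
Proof.
move=> sG F gF; have [Z HZ] := choice (fun n => gF n).
exists (\bigcup_n Z n); split; first by apply: saU => // n; case: (HZ n).
rewrite !setI_bigcupl; apply: eq_bigcupr => n _; by case: (HZ n).
Qed.

Lemma good_Cap {X : Type} (G : set (set X)) T : sigma_algebra setT G ->
  forall F : nat -> set X, (forall n, good G T (F n)) -> good G T (\bigcap_n F n).
Proof.
move=> sG F gF; rewrite -(setCK (\bigcap_n F n)) setC_bigcap; apply: good_C => //.
by apply: good_U => // n; apply: good_C.
Qed.

Lemma good_I {X : Type} (G : set (set X)) T : sigma_algebra setT G ->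
  forall A B, good G T A -> good G T B -> good G T (A `&` B).
Proof.
move=> sG A B [ZA [GA eA]] [ZB [GB eB]]; exists (ZA `&` ZB); split; first exact: saI.
by rewrite -[in LHS](setIid T) setIACA eA eB setIACA setIid.
Qed.

Lemma good_cst {X : Type} (G : set (set X)) T : sigma_algebra setT G ->
  forall P : Prop, good G T [set _ | P].
Proof.
move=> sG P; case: (pselect P) => p.
  by exists setT; split; [exact: saT|rewrite (_ : [set _ | P] = setT) //; apply/seteqP; split].
exists set0; split; first exact: sa0.
by rewrite (_ : [set _ | P] = set0) //; apply/seteqP; split.
Qed.

Lemma good_sa {X : Type} (G : set (set X)) T : sigma_algebra setT G ->
  sigma_algebra setT (good G T).
Proof.
move=> sG; split.
- exact: good_of (sa0 sG).
- by move=> A gA; rewrite setTD; apply: good_C.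
- exact: good_U.
Qed.

Lemma good_fun2 {X : Type} (G : set (set X)) T : sigma_algebra setT G ->
  forall (f g : X -> nat) (h : nat -> nat -> nat),
  (forall k, good G T [set x | f x = k]) -> (forall k, good G T [set x | g x = k]) ->
  forall n, good G T [set x | h (f x) (g x) = n].
Proof.
move=> sG f g h gf gg n.
rewrite (_ : [set x | h (f x) (g x) = n] = \bigcup_m \bigcup_m' 
   ([set x | f x = m] `&` [set x | g x = m'] `&` [set _ | h m m' = n])).
  apply: good_U => // m; apply: good_U => // m'.
  by apply: good_I => //; [apply: good_I|apply: good_cst].
apply/seteqP; split => x /=.
  by move=> e; exists (f x) => //; exists (g x).
by move=> [m _ [m' _ [[<- <-] e]]].
Qed.

Unset Implicit Arguments.
Local Open Scope ring_scope.

Lemma nd_to {T : choiceType} (F : nat -> set T) (Z : set T) : nondecreasing_seq F ->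
  finite_set ((\bigcup_i F i) `&` Z) ->
  exists N, forall i, cf (F (N + i)%N `&` Z) = cf ((\bigcup_i F i) `&` Z).
Proof.
move=> ndF fU.
have ndF' : nondecreasing_seq (fun i => F i `&` Z).
  by move=> a b ab; apply/subsetPset; apply: setSI; apply: nd_sub ndF _ _ ab.
have e : \bigcup_i (F i `&` Z) = (\bigcup_i F i) `&` Z by rewrite setI_bigcupl.
rewrite -e in fU *; have [N HN] := stab1 ndF' fU; exists N => i.
by rewrite -(HN i).
Qed.

Lemma nd_from {T : choiceType} (F : nat -> set T) (Z : set T) N n : nondecreasing_seq F ->
  (forall i, finite_set (F i `&` Z)) -> (forall i, cf (F (N + i)%N `&` Z) = n) ->
  (\bigcup_i F i) `&` Z = F N `&` Z.
Proof.
move=> ndF fF h.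
have ndF' : nondecreasing_seq (fun i => F i `&` Z).
  by move=> a b ab; apply/subsetPset; apply: setSI; apply: nd_sub ndF _ _ ab.
rewrite setI_bigcupl; apply: (stab2 ndF') => // i.
by rewrite h -(h 0%N) addn0.
Qed.

Theorem theorem1p1 (d : measure_display) (S : measurableType d)
  (d' : measure_display) (Om : measurableType d') (R : realType)
  (P : probability Om R) (E : set (set S))
  (hEI : setI_closed E) (hEgen : <<s E >> = @measurable d S)
  (pi1 pi2 : Om -> CS S) (h1 : crset pi1) (h2 : crset pi2)
  (hs1 : sigma_finite_on E pi1) (hs2 : sigma_finite_on E pi2)
  (hfd : forall (n : nat) (A : nat -> set S) (k : nat -> natinf),
     (0 < n)%N -> (forall i, (i < n)%N -> E (A i)) ->
     law P pi1 [set M : CS S | forall i, (i < n)%N -> NA_eq (A i) (proj1_sig M) (k i)]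
     = law P pi2 [set M : CS S | forall i, (i < n)%N -> NA_eq (A i) (proj1_sig M) (k i)]) :
  forall B : set (CS S), Csigma B -> law P pi1 B = law P pi2 B.
Proof.
move=> B CB.
have Emeas : forall A, E A -> measurable A.
  by move=> A EA; rewrite -hEgen; apply: sub_gen_smallest.
case: hs1 => A1 [EA1 [cA1 fA1]]; case: hs2 => A2 [EA2 [cA2 fA2]].
pose Bs j := A1 (Cantor.of_nat j).1 `&` A2 (Cantor.of_nat j).2.
have EB j : E (Bs j) by apply: hEI.
have cB : forall x, exists j, Bs j x.
  move=> x; have : (\bigcup_n A1 n) x by rewrite cA1.
  case=> a _ A1x; have : (\bigcup_n A2 n) x by rewrite cA2.
  case=> b _ A2x; exists (Cantor.to_nat (a, b)).
  by rewrite /Bs Cantor.cancel_of_to.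
pose T := [set M : CS S | forall j, finite_set (Bs j `&` proj1_sig M)].
have T1 : forall w, T (pi1 w).
  move=> w j; apply: sub_finite_set (fA1 w (Cantor.of_nat j).1).
  by move=> x [[a _] m]; split.
have T2 : forall w, T (pi2 w).
  move=> w j; apply: sub_finite_set (fA2 w (Cantor.of_nat j).2).
  by move=> x [[_ a] m]; split.
pose cyl n (A : nat -> set S) (k : nat -> natinf) :=
  [set M : CS S | forall i, (i < n)%N -> NA_eq (A i) (proj1_sig M) (k i)].
pose Gc := [set Y : set (CS S) | exists n (A : nat -> set S) (k : nat -> natinf),
  (0 < n)%N /\ (forall i, (i < n)%N -> E (A i)) /\ Y = cyl n A k].
pose FG := <<s Gc >>.
have sFG : sigma_algebra setT FG := smallest_sigma_algebra _ _.
pose cnt (A : set S) (M : CS S) := cf (A `&` proj1_sig M).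
have base : forall A n, E A -> (forall M, T M -> finite_set (A `&` proj1_sig M)) ->
    good FG T [set M | cnt A M = n].
  move=> A n EA fA; apply: (@good_ext _ _ _ _ (cyl 1%N (fun=> A) (fun=> Some n))).
    move=> M TM; split => [e i _|h]; first by apply/cf_eqI => //; apply: fA.
    by have := h 0%N erefl => /=; move/(cf_eqI _ (fA M TM)).
  apply: good_of; apply: sub_gen_smallest; exists 1%N, (fun=> A), (fun=> Some n).
  by split => //; split.
have gB : forall j A, measurable A -> forall n, good FG T [set M | cnt (A `&` Bs j) M = n].
  move=> j.
  pose H := [set A | measurable A /\ forall n, good FG T [set M | cnt (A `&` Bs j) M = n]].
  suff sub : <<s E >> `<=` H.
    move=> A mA n; have [_ gA] : H A by apply: sub; rewrite hEgen.
    exact: gA.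
  have fin : forall A M, T M -> finite_set ((A `&` Bs j) `&` proj1_sig M).
    move=> A M TM; apply: sub_finite_set (TM j); by move=> x [[_ ?] ?].
  apply: (lambda_system_subset hEI) => //; last first.
    move=> A EA; split; first exact: Emeas.
    by move=> n; apply: base; [exact: hEI|move=> M TM; exact: fin].
  split => //.
  - split; first exact: measurableT.
    by move=> n; rewrite setTI; apply: base => // M TM; rewrite -[Bs j]setTI; exact: fin.
  - move=> A A' A'A [mA gA] [mA' gA']; split; first exact: measurableD.
    move=> n; apply: (@good_ext _ _ _ _ [set M | subn (cnt (A `&` Bs j) M) (cnt (A' `&` Bs j) M) = n]).
      move=> M TM /=; rewrite /cnt -cf_D; last by move=> x [[? ?] ?]; split => //; split => //; apply: A'A.
        rewrite (_ : (A `&` Bs j `&` proj1_sig M) `\` (A' `&` Bs j `&` proj1_sig M) = (A `\` A') `&` Bs j `&` proj1_sig M) //.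
        by rewrite eqEsubset; split => x /=; tauto.
      exact: fin.
    by apply: good_fun2.
  - move=> F ndF HF; split.
      by apply: bigcup_measurable => k _; case: (HF k).
    move=> n.
    apply: (@good_ext _ _ _ _ (\bigcup_N \bigcap_i [set M | cnt (F (N + i)%N `&` Bs j) M = n])).
      move=> M TM; rewrite /cnt /=.
      have fZ : finite_set (Bs j `&` proj1_sig M) := TM j.
      split.
        move=> e; rewrite -setIA in e.
        have [N HN] := nd_to _ _ ndF (finite_setIr (\bigcup_i F i) fZ).
        by exists N => // i _ /=; rewrite -setIA HN e.
      move=> [N _ HN].
      have h i : cf (F (N + i)%N `&` (Bs j `&` proj1_sig M)) = n.
        by rewrite setIA; apply: HN.
      have eU := nd_from _ _ _ _ ndF (fun i => finite_setIr (F i) fZ) h.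
      by rewrite -setIA eU -(h 0%N) addn0.
    apply: good_U => // N; apply: good_Cap => // i.
    by case: (HF (N + i)%N) => _; apply.
pose DN N := \bigcup_(j in `I_N) Bs j.
have DNS : forall N, DN N.+1 = DN N `|` Bs N.
  move=> N; rewrite eqEsubset; split => x.
    move=> [j /= jN Bx]; move: jN; rewrite ltnS leq_eqVlt => /orP[/eqP ejN|jN].
      by right; rewrite -ejN.
    by left; exists j.
  move=> [[j /= jN Bx]|Bx]; last by exists N => /=.
  by exists j => //=; apply: ltnW.
have mDN : forall N, measurable (DN N).
  by move=> N; apply: bigcup_measurable => j _; apply: Emeas.
have finDN : forall N M, T M -> finite_set (DN N `&` proj1_sig M).
  elim=> [|N IH] M TM.
    rewrite (_ : DN 0%N = set0) ?set0I //.
    by rewrite eqEsubset; split => x // [j /= ].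
  by rewrite DNS setIUl finite_setU; split; [apply: IH|apply: TM].
have ndDN : nondecreasing_seq DN.
  move=> a b ab; apply/subsetPset => x [j /= ja Bx]; exists j => //=.
  exact: leq_trans ja ab.
have cDN : \bigcup_N DN N = setT.
  rewrite eqEsubset; split => // x _; have [j Bx] := cB x.
  by exists j.+1 => //; exists j => /=.
have gDN : forall N A, measurable A -> forall n, good FG T [set M | cnt (A `&` DN N) M = n].
  elim=> [|N IH] A mA n.
    apply: (@good_ext _ _ _ _ [set _ | 0%N = n]); last exact: good_cst.
    move=> M _ /=; rewrite (_ : DN 0%N = set0) ?setI0 /cnt ?set0I /cf ?fset_set0 ?cardfs0 //.
    by rewrite eqEsubset; split => x // [j /= ].
  apply: (@good_ext _ _ _ _ [set M | addn (cnt (A `&` DN N) M) (cnt ((A `\` DN N) `&` Bs N) M) = n]).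
    move=> M TM /=; rewrite /cnt -cf_U.
    - rewrite (_ : A `&` DN N `&` proj1_sig M `|` (A `\` DN N) `&` Bs N `&` proj1_sig M = A `&` DN N.+1 `&` proj1_sig M) //.
      rewrite DNS eqEsubset; split => x /=.
        by move=> [[[Ax Dx] Mx]|[[[Ax nDx] Bx] Mx]]; split => //; split => //; [left|right].
      move=> [[Ax [Dx|Bx]] Mx]; first by left.
      by case: (pselect (DN N x)) => Dx; [left|right].
    - by apply: sub_finite_set (finDN N M TM) => x [[_ ?] ?].
    - by apply: sub_finite_set (TM N) => x [[_ ?] ?].
    - by rewrite eqEsubset; split => x // [[[_ Dx] _] [[[_ nDx] _] _]].
  apply: good_fun2 => // k; first exact: IH.
  by apply: gB; apply: measurableD.
have ggen : forall A k, measurable A -> good FG T [set M | NA_eq A (proj1_sig M) k].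
  have gS : forall A n, measurable A -> good FG T [set M | NA_eq A (proj1_sig M) (Some n)].
    move=> A n mA.
    apply: (@good_ext _ _ _ _ (\bigcup_N \bigcap_i [set M | cnt (A `&` DN (N + i)%N) M = n])); last first.
      by apply: good_U => // N; apply: good_Cap => // i; apply: gDN.
    move=> M TM /=.
    have eI : forall D, A `&` D `&` proj1_sig M = D `&` (A `&` proj1_sig M).
      by move=> D; rewrite setIAC setIC.
    split.
      move=> e; have fZ : finite_set (A `&` proj1_sig M) by exists n.
      have fU : finite_set (\bigcup_N DN N `&` (A `&` proj1_sig M)) by rewrite cDN setTI.
      have [N HN] := nd_to _ _ ndDN fU.
      exists N => // i _ /=; rewrite /cnt eI HN cDN setTI; exact/cf_eqI.
    move=> [N _ HN].
    have h i : cf (DN (N + i)%N `&` (A `&` proj1_sig M)) = n.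
      by rewrite -eI; apply: HN.
    have fi : forall i, finite_set (DN i `&` (A `&` proj1_sig M)).
      by move=> i; apply: sub_finite_set (finDN i M TM) => x [? [_ ?]]; split.
    have eU := nd_from _ _ _ _ ndDN fi h.
    rewrite cDN setTI in eU.
    have fZ : finite_set (A `&` proj1_sig M) by rewrite eU; apply: fi.
    by apply/cf_eqI => //; rewrite eU -(h 0%N) addn0.
  move=> A [n|] mA; first exact: gS.
  apply: (@good_ext _ _ _ _ (~` \bigcup_n [set M | NA_eq A (proj1_sig M) (Some n)])).
    move=> M _ /=; split => [nf [n _ e]|h [n e]]; first by apply: nf; exists n.
    by apply: h; exists n.
  by apply: good_C => //; apply: good_U => // n; apply: gS.
have gall : forall Y, Csigma Y -> good FG T Y.
  apply: smallest_sub; first exact: good_sa.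
  by move=> Y [A [k [mA ->]]]; apply: ggen.
have CsA : sigma_algebra setT (@Csigma d S) := smallest_sigma_algebra _ _.
have Gc_C : forall Y, Gc Y -> Csigma Y.
  move=> Y [n [A [k [_ [EA ->]]]]].
  rewrite (_ : cyl n A k = \bigcap_i [set M : CS S | (i < n)%N -> NA_eq (A i) (proj1_sig M) (k i)]); last first.
    by rewrite eqEsubset; split => M /= h; [move=> i _; exact: h|move=> i; exact: h].
  apply: saCap => // i; case: (ltnP i n) => h.
    rewrite (_ : [set M : CS S | _] = [set M : CS S | NA_eq (A i) (proj1_sig M) (k i)]).
      apply: sub_gen_smallest; exists (A i), (k i); split => //; exact: Emeas (EA i h).
    by rewrite eqEsubset; split => M /=; [apply|move=> ? _].
  rewrite (_ : [set M : CS S | _] = setT); first exact: saT.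
  by rewrite eqEsubset; split => M //= _; rewrite ltnNge h.
have GcI : setI_closed Gc.
  move=> Y1 Y2 [n1 [A1' [k1 [p1 [E1 ->]]]]] [n2 [A2' [k2 [p2 [E2 ->]]]]].
  exists (n1 + n2)%N, (fun i => if (i < n1)%N then A1' i else A2' (i - n1)%N),
    (fun i => if (i < n1)%N then k1 i else k2 (i - n1)%N).
  split; first by rewrite addn_gt0 p1.
  split.
    move=> i hi; case: (ltnP i n1) => h; first exact: E1.
    by apply: E2; rewrite ltn_subLR.
  rewrite eqEsubset; split => M /=.
    move=> [c1 c2] i hi; case: (ltnP i n1) => h; first exact: c1.
    by apply: c2; rewrite ltn_subLR.
  move=> c; split => i hi.
    by have := c i (ltn_addr _ hi); rewrite hi.
  have := c (n1 + i)%N; rewrite ltn_add2l => /(_ hi).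
  by rewrite ltnNge leq_addr /= addKn.
have D1 : FG `<=` [set Y | Csigma Y /\ P (pi1 @^-1` Y) = P (pi2 @^-1` Y)].
  apply: (lambda_system_subset GcI) => //; last first.
    move=> Y GY; split; first exact: Gc_C.
    by case: GY => n [A [k [p [EA ->]]]]; apply: hfd.
  split => //.
  - by split; first exact: saT.
  - move=> Y Y' Y'Y [CY eY] [CY' eY']; split.
      by rewrite setDE; apply: (saI CsA) => //; apply: (saC CsA).
    have mD : forall pi, crset pi -> P (pi @^-1` (Y `\` Y')) = (P (pi @^-1` Y) - P (pi @^-1` Y'))%E.
      move=> pi hpi; rewrite (_ : pi @^-1` (Y `\` Y') = pi @^-1` Y `\` pi @^-1` Y') //.
      rewrite measureD; [|exact: hpi|exact: hpi|].
      + by rewrite setIidr // => w; apply: Y'Y.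
      + exact: Order.POrderTheory.le_lt_trans (probability_le1 P (hpi _ CY)) (ltry _).
    by rewrite !mD // eY eY'.
  - move=> F ndF HF; split; first by apply: saU => // n; case: (HF n).
    have c : forall pi, crset pi ->
        (P \o (fun n => pi @^-1` F n)) x @[x --> \oo] --> P (pi @^-1` \bigcup_n F n).
      move=> pi hpi; rewrite preimage_bigcup; apply: nondecreasing_cvg_mu.
      - by move=> i; apply: hpi; case: (HF i).
      - by rewrite -preimage_bigcup; apply: hpi; apply: saU => // n; case: (HF n).
      - by move=> a b ab; apply/subsetPset => w; apply: (nd_sub ndF ab).
    have e : (P \o (fun n => pi1 @^-1` F n)) = (P \o (fun n => pi2 @^-1` F n)).
      by apply/funext => n /=; case: (HF n).
    rewrite -(cvg_lim (@ereal_hausdorff _) (c _ h1)) e.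
    exact: (cvg_lim (@ereal_hausdorff _) (c _ h2)).
have [Y [FY eY]] := gall B CB.
have [_ eP] := D1 Y FY.
have pre : forall f : Om -> CS S, (forall w, T (f w)) -> f @^-1` B = f @^-1` Y.
  move=> f hT; rewrite eqEsubset; split => w /= h.
    have : (B `&` T) (f w) by split.
    by rewrite eY => -[].
  have : (Y `&` T) (f w) by split.
  by rewrite -eY => -[].
by rewrite /law (pre _ T1) (pre _ T2).
Qed.
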